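(* Let $K$ be a reversible substochastic kernel on a finite probability space $(E,\rho)$, and let $\delta=\rho(1-K1)$. Assume that for all nonnegative $f$, $\operatorname{Ent}_\rho(f^2)\le A\,\mathcal E^\rho_K(f,f)$. Let $T_t=e^{t(K-I)}$ and $u_t=T_tu_0$ for any $u_0\ge0$. Then for all $t\ge0$, \[ H_\rho(u_t)\le e^{-t/A}H_\rho(u_0)+A\delta\,\rho(u_0)(1-e^{-t/A}). \]
   Context: A substochastic kernel is a nonnegative kernel with row sums at most one; reversible means $\rho(x)K(x,y)=\rho(y)K(y,x)$. $\mathcal E^\rho_K(f,f)=\langle f,(I-K)f\rangle_\rho$. $\operatorname{Ent}_\rho(f^2)=\rho(f^2\log f^2)-\rho(f^2)\log\rho(f^2)$. For nonnegative $u$, $H_\rho(u)=\rho\left[u\log\frac{u}{\rho(u)}\right]$ with the convention $0\log0=0$. $1$ denotes the constant function. *)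

(* Defs.v *)
From HB Require Import structures.
From mathcomp Require Import all_boot all_order all_algebra.
From mathcomp Require Import all_classical all_reals all_analysis.
Set Implicit Arguments. Unset Strict Implicit. Unset Printing Implicit Defensive.
Import Order.TTheory GRing.Theory Num.Theory numFieldNormedType.Exports.
Local Open Scope ring_scope.

Section Defs.
Variables (R : realType) (E : finType).

Definition expect (rho f : E -> R) : R := \sum_(x : E) rho x * f x.

Definition prob (rho : E -> R) : Prop :=
  (forall x, 0 <= rho x) /\ \sum_(x : E) rho x = 1.

Definition substochastic (K : E -> E -> R) : Prop :=
  (forall x y, 0 <= K x y) /\ (forall x, \sum_(y : E) K x y <= 1).

Definition reversible (rho : E -> R) (K : E -> E -> R) : Prop :=
  forall x y, rho x * K x y = rho y * K y x.

Definition kapply (K : E -> E -> R) (f : E -> R) : E -> R :=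
  fun x => \sum_(y : E) K x y * f y.

Definition dirichlet (rho : E -> R) (K : E -> E -> R) (f : E -> R) : R :=
  expect rho (fun x => f x * (f x - kapply K f x)).

Definition xlnx (s : R) : R := if s == 0 then 0 else s * ln s.

(* Ent_rho(g) = rho(g log g) - rho(g) log rho(g); used with g = f^2 *)
Definition Ent (rho g : E -> R) : R :=
  expect rho (fun x => xlnx (g x)) - xlnx (expect rho g).

Definition Hent (rho u : E -> R) : R :=
  expect rho (fun x => if u x == 0 then 0 else u x * ln (u x / expect rho u)).

Definition gen (K : E -> E -> R) (f : E -> R) : E -> R :=
  fun x => kapply K f x - f x.

Definition semigroup (K : E -> E -> R) (t : R) (u : E -> R) : E -> R :=
  fun x => limn (series (fun k : nat => t ^+ k / (k`!)%:R * iter k (gen K) u x)).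

Definition defect (rho : E -> R) (K : E -> E -> R) : R :=
  expect rho (fun x => 1 - kapply K (fun _ => 1) x).

End Defs.

(* Main.v *)
Require Import Defs.
From HB Require Import structures.
From mathcomp Require Import all_boot all_order all_algebra.
From mathcomp Require Import all_classical all_reals all_analysis.
From mathcomp Require Import ring lra.
Import Order.TTheory GRing.Theory Num.Theory numFieldNormedType.Exports.
Local Open Scope ring_scope.

Module Helpers.
Set Implicit Arguments. Unset Strict Implicit. Unset Printing Implicit Defensive.
Local Open Scope classical_set_scope.
Local Open Scope ring_scope.
Section P1.
Variables (R : realType) (E : finType).
Implicit Types (M : E -> E -> R) (u v : E -> R).

Definition CM M : R := \sum_(x : E) \sum_(y : E) `|M x y|.
Definition nrm u : R := \sum_(y : E) `|u y|.

Lemma nrm_ge u y : `|u y| <= nrm u.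
Proof.
rewrite /nrm (bigD1 y) //= lerDl; apply: sumr_ge0 => *; exact: normr_ge0.
Qed.

Lemma CM_ge0 M : 0 <= CM M.
Proof. by apply: sumr_ge0 => x _; apply: sumr_ge0 => *. Qed.

Lemma row_le M x : \sum_(y : E) `|M x y| <= CM M.
Proof.
rewrite /CM [X in _ <= X](bigD1 x) //= lerDl; apply: sumr_ge0 => z _; apply: sumr_ge0 => *.
exact: normr_ge0.
Qed.

Lemma kapply_bound M f B : (forall y, `|f y| <= B) ->
  forall x, `|kapply M f x| <= CM M * B.
Proof.
move=> hf x; rewrite /kapply.
apply: (le_trans (ler_norm_sum _ _ _)).
have B0 : 0 <= B by apply: le_trans (hf x); exact: normr_ge0.
apply: (@le_trans _ _ (\sum_y `|M x y| * B)).
  by apply: ler_sum => y _; rewrite normrM ler_wpM2l.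
by rewrite -mulr_suml ler_wpM2r // row_le.
Qed.

Lemma iter_bound M u k x : `|iter k (kapply M) u x| <= CM M ^+ k * nrm u.
Proof.
elim: k x => [|k IH] x; first by rewrite expr0 mul1r nrm_ge.
by rewrite iterS exprS -mulrA; apply: kapply_bound.
Qed.

Definition coef M u x (k : nat) : R := iter k (kapply M) u x / k`!%:R.
Definition Sg M t u x : R := limn (pseries (coef M u x) t).

Lemma cvg_Sg M u x t : cvgn (pseries (coef M u x) t).
Proof.
apply: normed_cvg.
apply: (@series_le_cvg _ _ (fun k => nrm u * exp_coeff (CM M * `|t|) k)).
- by move=> n /=; exact: normr_ge0.
- move=> n; apply: mulr_ge0; first by apply: sumr_ge0.
  by apply: exp_coeff_ge0; rewrite mulr_ge0 ?CM_ge0.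
- move=> n /=; rewrite /coef /exp_coeff /= normrM normrM normfV normrX.
  rewrite [`|n`!%:R|]ger0_norm // exprMn.
  rewrite (_ : _ * _ * _ = `|iter n (kapply M) u x| * (`|t| ^+ n / n`!%:R)); last by ring.
  rewrite (_ : nrm u * _ = CM M ^+ n * nrm u * (`|t| ^+ n / n`!%:R)); last by ring.
  apply: ler_wpM2r; last exact: iter_bound.
  by rewrite mulr_ge0 ?exprn_ge0 ?invr_ge0.
- rewrite (_ : (fun k => _) = nrm u *: exp_coeff (CM M * `|t|)); last by [].
  apply: is_cvg_seriesZ; exact: is_cvg_series_exp_coeff.
Qed.

Lemma diffs_coef M u x : pseries_diffs (coef M u x) = coef M (kapply M u) x.
Proof.
apply/funext => k; rewrite /pseries_diffs /coef iterSr factS natrM invfM.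
have h1 : k.+1%:R != 0 :> R by rewrite pnatr_eq0.
have h2 : k`!%:R != 0 :> R by rewrite pnatr_eq0 -lt0n fact_gt0.
by rewrite mulrCA [_.+1%:R * (_ / _)]mulrA mulfV // mul1r.
Qed.

Lemma is_derive_Sg M u (x : E) (t : R) :
  is_derive t (1 : R) (fun s => Sg M s u x) (Sg M t (kapply M u) x).
Proof.
rewrite /Sg -diffs_coef.
apply: (@pseries_snd_diffs _ _ (`|t| + 1)).
- exact: cvg_Sg.
- rewrite diffs_coef; exact: cvg_Sg.
- rewrite !diffs_coef; exact: cvg_Sg.
- by rewrite (@ger0_norm _ (`|t| + 1)) ?ltrDl // addr_ge0.
Qed.



Lemma cvg_sumE {T : Type} {F : set_system T} {FF : Filter F}
  (G : E -> T -> R) (l : E -> R) :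
  (forall y, G y @ F --> l y) -> (fun s => \sum_y G y s) @ F --> \sum_y l y.
Proof.
move=> h; rewrite -fct_sumE.
elim/big_rec2: _ => [|y a g _ IH]; first exact: cvg_cst.
exact: cvgD.
Qed.

Lemma kapply_lin M a b u v x :
  kapply M (fun y => a * u y + b * v y) x = a * kapply M u x + b * kapply M v x.
Proof.
rewrite /kapply !mulr_sumr -big_split /=; apply: eq_bigr => y _; ring.
Qed.

Lemma iter_lin M a b u v k :
  iter k (kapply M) (fun y => a * u y + b * v y) =
  (fun y => a * iter k (kapply M) u y + b * iter k (kapply M) v y).
Proof.
elim: k => [//|k IH]; rewrite !iterS IH; apply/funext => x.
exact: kapply_lin.
Qed.

Lemma Sg_lin M a b u v t x :
  Sg M t (fun y => a * u y + b * v y) x = a * Sg M t u x + b * Sg M t v x.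
Proof.
rewrite /Sg.
have -> : pseries (coef M (fun y => a * u y + b * v y) x) t =
    (fun n => a * pseries (coef M u x) t n + b * pseries (coef M v x) t n).
  apply/funext => n; rewrite /pseries /series /= /coef.
  under eq_bigr do rewrite iter_lin.
  rewrite !mulr_sumr -big_split /=; apply: eq_bigr => i _; ring.
apply: cvg_lim => //; apply: cvgD; apply: cvgMl_tmp; exact: cvg_Sg.
Qed.

Lemma Sg_kapply M u t x :
  Sg M t (kapply M u) x = kapply M (fun y => Sg M t u y) x.
Proof.
rewrite /Sg /kapply.
have -> : pseries (coef M (kapply M u) x) t =
    (fun n => \sum_y M x y * pseries (coef M u y) t n).
  apply/funext => n; rewrite /pseries /series /= /coef.
  under eq_bigr do rewrite -iterSr iterS /= /kapply.
  under [in RHS]eq_bigr do rewrite big_distrr /=.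
  rewrite exchange_big /=; apply: eq_bigr => i _.
  rewrite !mulr_suml; apply: eq_bigr => y _; rewrite /kapply; ring.
apply: cvg_lim => //; apply: cvg_sumE => y.
apply: cvgMl_tmp; exact: cvg_Sg.
Qed.

Lemma Sg0 M u x : Sg M 0 u x = u x.
Proof.
rewrite /Sg; apply: cvg_lim => //; rewrite -cvg_shiftS.
apply: cvg_near_cst; near=> n.
rewrite /pseries /series /= big_nat_recl // big1 ?addr0 /coef /= ?divr1 ?mulr1 //.
by move=> i _; rewrite expr0n /= mulr0.
Unshelve. all: by end_near.
Qed.

End P1.

Section P2.
Variables (R : realType) (E : finType).
Implicit Types (M : E -> E -> R) (u v : E -> R).

Lemma is_deriveM' (f g : R -> R) (s df dg : R) :
  is_derive s 1 f df -> is_derive s 1 g dg ->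
  is_derive s 1 (fun r => f r * g r) (f s * dg + g s * df).
Proof. by move=> h1 h2; have := is_deriveM h1 h2. Qed.

Lemma is_deriveD' (f g : R -> R) (s df dg : R) :
  is_derive s 1 f df -> is_derive s 1 g dg ->
  is_derive s 1 (fun r => f r + g r) (df + dg).
Proof. by move=> h1 h2; have := is_deriveD h1 h2. Qed.

Lemma is_deriveB' (f g : R -> R) (s df dg : R) :
  is_derive s 1 f df -> is_derive s 1 g dg ->
  is_derive s 1 (fun r => f r - g r) (df - dg).
Proof. by move=> h1 h2; have := is_deriveB h1 h2. Qed.

Lemma is_derive_sumE (h : E -> R -> R) (dh : E -> R) (s : R) :
  (forall i, is_derive s 1 (h i) (dh i)) ->
  is_derive s 1 (fun r => \sum_i h i r) (\sum_i dh i).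
Proof.
move=> hd; rewrite -fct_sumE.
elim/big_rec2: _ => [|i a g _ IH]; first exact: is_derive_cst.
exact: is_deriveD.
Qed.

Lemma is_derive_expRc (c s : R) :
  is_derive s 1 (fun r => expR (c * r)) (c * expR (c * s)).
Proof.
have h1 : is_derive s 1 (fun r => c * r) c.
  by have := @is_deriveZ R R R id c s 1 1 (is_derive_id _ _); rewrite /GRing.scale /= mulr1.
have := is_derive1_comp (is_derive_expR (c * s)) h1.
by rewrite mulrC.
Qed.

Lemma nonincr_deriv (f df : R -> R) (t : R) : 0 <= t ->
  (forall s, 0 <= s <= t -> is_derive s 1 f (df s)) ->
  (forall s, 0 < s < t -> df s <= 0) -> f t <= f 0.
Proof.
move=> t0 hd hn; move: t0; rewrite le_eqVlt => /orP[/eqP <- //|tp].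
have h1 : forall x, x \in `]0, t[ -> is_derive x 1 f (df x).
  move=> x; rewrite in_itv /= => /andP[a b]; apply: hd.
  by rewrite !ltW.
have h2 : {within `[0, t], continuous f}.
  apply: derivable_within_continuous => x; rewrite in_itv /= => /andP[a b].
  by case: (hd x _) => //; rewrite a b.
have [c cI eq] := MVT tp h1 h2.
rewrite -subr_le0 eq subr0; apply: mulr_le0_ge0; last exact: ltW.
by apply: hn; move: cI; rewrite in_itv.
Qed.


Lemma iter_ge0 M u k x : (forall x y, 0 <= M x y) -> (forall y, 0 <= u y) ->
  0 <= iter k (kapply M) u x.
Proof.
move=> hM hu; elim: k x => [|k IH] x; first exact: hu.
by rewrite iterS; apply: sumr_ge0 => y _; rewrite mulr_ge0.
Qed.

Lemma Sg_ge M u t x : (forall x y, 0 <= M x y) -> (forall y, 0 <= u y) ->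
  0 <= t -> u x <= Sg M t u x.
Proof.
move=> hM hu t0; rewrite /Sg.
have nd : nondecreasing_seq (pseries (coef M u x) t).
  apply: (@nondecreasing_series _ _ xpredT 0) => n _ _.
  rewrite /coef mulr_ge0 ?exprn_ge0 // divr_ge0 // iter_ge0 //.
have := nondecreasing_cvgn_le nd (@cvg_Sg R E M u x t) 1.
by rewrite /pseries /series /= big_nat1 /coef /= divr1 mulr1.
Qed.

Definition Lm (K : E -> E -> R) : E -> E -> R := fun x y => K x y - (x == y)%:R.

Lemma kapply_Lm K f x : kapply (Lm K) f x = kapply K f x - f x.
Proof.
rewrite /kapply /Lm; under eq_bigr do rewrite mulrBl.
rewrite sumrB; congr (_ - _).
rewrite (bigD1 x) //= eqxx mul1r big1 ?addr0 // => y /negbTE.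
by rewrite eq_sym => ->; rewrite mul0r.
Qed.

Lemma semigroupE K t u x : semigroup K t u x = Sg (Lm K) t u x.
Proof.
rewrite /semigroup /Sg.
have -> : gen K = kapply (Lm K).
  by apply/funext => f; apply/funext => y; rewrite kapply_Lm.
rewrite (_ : series _ = pseries (coef (Lm K) u x) t) //.
apply/funext => n; rewrite /pseries /series /=.
by apply: eq_bigr => k _; rewrite /coef; ring.
Qed.

End P2.

Section P3.
Variables (R : realType) (E : finType).
Implicit Types (M : E -> E -> R) (u v : E -> R).

Lemma kapply_sub M f g c x :
  kapply M (fun y => f y - c * g y) x = kapply M f x - c * kapply M g x.
Proof.
rewrite /kapply mulr_sumr -sumrB; apply: eq_bigr => y _; ring.
Qed.

Lemma col_le M y : \sum_(x : E) `|M x y| <= CM M.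
Proof.
rewrite /CM exchange_big [X in _ <= X](bigD1 y) //= lerDl.
by apply: sumr_ge0 => z _; apply: sumr_ge0 => *.
Qed.

Lemma prod_le (m a b : R) : m * (a * b) <= `|m| * (a * a + b * b).
Proof.
apply: (le_trans (ler_norm _)); rewrite normrM ler_wpM2l //.
rewrite ler_norml; apply/andP; split; nra.
Qed.

Lemma quad_bound M w :
  \sum_y w y * kapply M w y <= 2 * CM M * \sum_y w y * w y.
Proof.
rewrite /kapply.
apply: (@le_trans _ _ (\sum_y \sum_z `|M y z| * (w y * w y + w z * w z))).
  apply: ler_sum => y _; rewrite mulr_sumr; apply: ler_sum => z _.
  rewrite (_ : _ * _ = M y z * (w y * w z)); last by ring.
  exact: prod_le.
under eq_bigr do (under eq_bigr do rewrite mulrDr); under eq_bigr do rewrite big_split /=.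
rewrite big_split /=.
rewrite (_ : 2 * CM M * _ = CM M * (\sum_y w y * w y) + CM M * (\sum_y w y * w y));
  last by ring.
apply: lerD.
  rewrite mulr_sumr; apply: ler_sum => y _; rewrite -mulr_suml.
  by rewrite ler_wpM2r ?row_le // -expr2 sqr_ge0.
rewrite exchange_big mulr_sumr; apply: ler_sum => y _; rewrite -mulr_suml.
by rewrite ler_wpM2r ?col_le // -expr2 sqr_ge0.
Qed.


Lemma Sg_Lm K u s x : 0 <= s -> Sg (Lm K) s u x = expR (- s) * Sg K s u x.
Proof.
move=> s0.
pose d r y := Sg (Lm K) r u y - expR (-1 * r) * Sg K r u y.
have dd : forall (r : R) (y : E), is_derive r (1 : R) (fun q => d q y) (kapply (Lm K) (d r) y).
  move=> r y; apply: is_derive_eq.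
    exact: (is_deriveB' (is_derive_Sg (Lm K) u y r)
             (is_deriveM' (is_derive_expRc (-1) r) (is_derive_Sg K u y r))).
  rewrite /d kapply_sub !Sg_kapply !kapply_Lm; ring.
pose z r := \sum_y d r y * d r y.
pose C := 4 * CM (Lm K).
have hphi : forall r : R, is_derive r (1 : R) (fun q => expR (- C * q) * z q)
   (expR (- C * r) * (\sum_y (d r y * kapply (Lm K) (d r) y + d r y * kapply (Lm K) (d r) y))
    + z r * (- C * expR (- C * r))).
  move=> r; apply: is_deriveM'; first exact: is_derive_expRc.
  by apply: is_derive_sumE => y; apply: is_deriveM'.
have := nonincr_deriv s0 (fun r _ => hphi r).
have d0 : forall y, d 0 y = 0.
  by move=> y; rewrite /d !Sg0 mulr0 expR0 mul1r subrr.
have z0 : z 0 = 0 by rewrite /z big1 // => y _; rewrite d0 mulr0.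
have zge : forall r, 0 <= z r by move=> r; apply: sumr_ge0 => y _; rewrite -expr2 sqr_ge0.
rewrite z0 mulr0 => /(_ _) hle.
have {hle} hle : expR (- C * s) * z s <= 0.
  apply: hle => r _; rewrite big_split /=.
  have hq := quad_bound (Lm K) (d r).
  have he := expR_gt0 (- C * r).
  rewrite /C; move: hq; rewrite -/(z r).
  set S := \sum_y _; set Z := z r; move=> hq.
  nra.
have zs : z s = 0.
  apply/eqP; rewrite eq_le zge andbT.
  by rewrite -(pmulr_rle0 _ (expR_gt0 (- C * s))).
have h : forall y, true -> 0 <= d s y * d s y.
  by move=> y _; rewrite -expr2 sqr_ge0.
have /eqP := @psumr_eq0P _ _ _ _ h zs x isT.
rewrite mulf_eq0 orbb /d subr_eq0 mulN1r => /eqP //.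
Qed.

End P3.

Section P4.
Variables (R : realType) (E : finType).

Lemma ln_le_sub1 (x : R) : 0 < x -> ln x <= x - 1.
Proof.
move=> x0; have := @le_ln1Dx R (x - 1).
rewrite (_ : 1 + (x - 1) = x); last by ring.
by apply; lra.
Qed.

Lemma g_ge0 (v : R) : 0 < v -> 0 <= 1 - v + v * ln v.
Proof.
move=> v0; have vi : 0 < v^-1 by rewrite invr_gt0.
have h := ln_le_sub1 vi.
rewrite lnV ?posrE // in h.
have : v * (- ln v) <= v * (v^-1 - 1) by rewrite ler_wpM2l // ltW.
rewrite mulrBr mulfV ?gt_eqF // mulr1; lra.
Qed.

Lemma sc_ineq (a b : R) : 0 < a -> 0 < b ->
  (a - b) ^+ 2 <= (a ^+ 2 - b ^+ 2) * (ln (a ^+ 2) - ln (b ^+ 2)).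
Proof.
wlog ab : a b / b <= a.
  move=> H a0 b0; case: (leP b a) => h; first exact: H.
  rewrite (_ : (a - b) ^+ 2 = (b - a) ^+ 2); last by ring.
  rewrite (_ : (a ^+ 2 - b ^+ 2) * _ = (b ^+ 2 - a ^+ 2) * (ln (b ^+ 2) - ln (a ^+ 2)));
    last by ring.
  by apply: H => //; rewrite ltW.
move=> a0 b0.
set L := ln (a ^+ 2) - ln (b ^+ 2).
have hL : a ^+ 2 - b ^+ 2 <= a ^+ 2 * L.
  have a20 : 0 < a ^+ 2 by rewrite exprn_gt0.
  have b20 : 0 < b ^+ 2 by rewrite exprn_gt0.
  have h := ln_le_sub1 (divr_gt0 b20 a20).
  rewrite ln_div ?posrE // in h.
  have : a ^+ 2 * (ln (b ^+ 2) - ln (a ^+ 2)) <= a ^+ 2 * (b ^+ 2 / a ^+ 2 - 1).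
    by rewrite ler_wpM2l // ltW.
  rewrite !mulrBr mulr1 mulrCA mulfV ?gt_eqF // mulr1 /L; lra.
have hab : 0 <= a - b by rewrite subr_ge0.
have hL0 : 0 <= L.
  rewrite /L subr_ge0 ler_ln ?posrE ?exprn_gt0 //.
  by rewrite lerXn2r // ?nnegrE ltW.
have key : a - b <= (a + b) * L.
  have a20 : 0 < a ^+ 2 by rewrite exprn_gt0.
  rewrite -(ler_pM2l a20).
  have : (a + b) * (a ^+ 2 - b ^+ 2) <= (a + b) * (a ^+ 2 * L).
    by rewrite ler_wpM2l // addr_ge0 // ltW.
  have : 0 <= (a - b) * (2 * a * b + b ^+ 2).
    by rewrite mulr_ge0 // addr_ge0 ?mulr_ge0 ?exprn_ge0 // ltW.
  nra.
rewrite (_ : a ^+ 2 - b ^+ 2 = (a - b) * (a + b)); last by ring.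
rewrite expr2 -mulrA ler_wpM2l //; rewrite mulrC; exact: key.
Qed.


Lemma keyQ (rho : E -> R) (K : E -> E -> R) (a : E -> R) :
  (forall x, 0 <= rho x) -> (forall x y, 0 <= K x y) ->
  (forall x, \sum_y K x y <= 1) ->
  reversible rho K -> (forall x, 0 < a x) ->
  dirichlet rho K a +
    \sum_x rho x * (kapply (Lm K) (fun y => a y ^+ 2) x * ln (a x ^+ 2))
  <= defect rho K.
Proof.
move=> hr hK hK1 hrev ha.
pose l x := ln (a x ^+ 2).
pose T x y := a x ^+ 2 * l x - a y ^+ 2 * l x - a x ^+ 2 + a x * a y.
have id : defect rho K - dirichlet rho K a -
    \sum_x rho x * (kapply (Lm K) (fun y => a y ^+ 2) x * ln (a x ^+ 2)) =
  \sum_x rho x * (1 - kapply K (fun _ => 1) x) * (1 - a x ^+ 2 + a x ^+ 2 * l x)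
  + \sum_x \sum_y rho x * K x y * T x y.
  rewrite /defect /dirichlet /expect -!sumrB -big_split /=.
  apply: eq_bigr => x _; rewrite kapply_Lm.
  have e1 : \sum_y rho x * K x y * T x y =
    rho x * (a x ^+ 2 * l x - a x ^+ 2) * kapply K (fun _ => 1) x
    - rho x * l x * kapply K (fun y => a y ^+ 2) x + rho x * a x * kapply K a x.
    rewrite /kapply !mulr_sumr -sumrB -big_split /=; apply: eq_bigr => y _.
    rewrite /T; ring.
  rewrite e1 /l; ring.
have sym : \sum_x \sum_y rho x * K x y * T x y = \sum_x \sum_y rho x * K x y * T y x.
  rewrite exchange_big /=; apply: eq_bigr => x _; apply: eq_bigr => y _.
  by rewrite hrev.
have pos2 : 0 <= \sum_x \sum_y rho x * K x y * (T x y + T y x).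
  apply: sumr_ge0 => x _; apply: sumr_ge0 => y _.
  rewrite mulr_ge0 ?mulr_ge0 //.
  have := sc_ineq (ha x) (ha y); rewrite /T /l; nra.
have pos1 : 0 <= \sum_x rho x * (1 - kapply K (fun _ => 1) x) * (1 - a x ^+ 2 + a x ^+ 2 * l x).
  apply: sumr_ge0 => x _; rewrite mulr_ge0 ?mulr_ge0 //.
    rewrite subr_ge0 /kapply; under eq_bigr do rewrite mulr1; exact: hK1.
  by apply: g_ge0; rewrite exprn_gt0.
have : 0 <= \sum_x \sum_y rho x * K x y * T x y.
  have e2 : \sum_x \sum_y rho x * K x y * (T x y + T y x) =
    (\sum_x \sum_y rho x * K x y * T x y) + \sum_x \sum_y rho x * K x y * T x y.
    rewrite [X in _ = _ + X]sym -big_split /=; apply: eq_bigr => x _.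
    rewrite -big_split /=; apply: eq_bigr => y _; ring.
  move: pos2; rewrite e2; lra.
move: id pos1; lra.
Qed.

End P4.

Section P5.
Variables (R : realType) (E : finType).

Lemma expect_gt0 (rho U : E -> R) : prob rho -> (forall x, 0 < U x) ->
  0 < expect rho U.
Proof.
move=> [hr h1] hU; rewrite lt_neqAle.
have ge : 0 <= expect rho U by apply: sumr_ge0 => x _; rewrite mulr_ge0 // ltW.
rewrite ge andbT; apply/eqP => /esym h0.
have hx : forall x, true -> 0 <= rho x * U x by move=> x _; rewrite mulr_ge0 // ltW.
have r0 : forall x, rho x = 0.
  move=> x; have := @psumr_eq0P _ _ _ _ hx h0 x isT.
  by move/eqP; rewrite mulf_eq0 (gt_eqF (hU x)) orbF => /eqP.
by move: h1; rewrite big1 // => /eqP; rewrite eq_sym oner_eq0.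
Qed.

Lemma keyU (rho : E -> R) (K : E -> E -> R) (A : R) (U : E -> R) :
  prob rho -> substochastic K -> reversible rho K -> 0 < A ->
  (forall f : E -> R, (forall x, 0 <= f x) ->
     Ent rho (fun x => f x ^+ 2) <= A * dirichlet rho K f) ->
  (forall x, 0 < U x) ->
  \sum_x rho x * (kapply (Lm K) U x * (ln (U x) - ln (expect rho U))) <=
   - A^-1 * (\sum_x rho x * (U x * ln (U x)) - expect rho U * ln (expect rho U))
   + defect rho K * expect rho U.
Proof.
move=> hp [hK hK1] hrev A0 hLSI hU.
have m0 := expect_gt0 hp hU.
set m := expect rho U in m0 *.
pose v x := U x / m.
have v0 : forall x, 0 < v x by move=> x; rewrite divr_gt0.
pose a x := Num.sqrt (v x).
have a0 : forall x, 0 < a x by move=> x; rewrite sqrtr_gt0.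
have a2 : (fun x => a x ^+ 2) = v.
  by apply/funext => x; rewrite sqr_sqrtr // ltW.
have ev : expect rho v = 1.
  rewrite /expect; under eq_bigr do rewrite /v mulrA.
  by rewrite -mulr_suml -/(expect rho U) -/m mulfV // gt_eqF.
have Ent_eq : Ent rho (fun x => a x ^+ 2) = \sum_x rho x * (v x * ln (v x)).
  rewrite a2 /Ent ev /xlnx oner_eq0 ln1 mulr0 subr0.
  by apply: eq_bigr => x _; rewrite gt_eqF.
have lsi := hLSI a (fun x => ltW (a0 x)).
rewrite Ent_eq in lsi.
have q := keyQ hp.1 hK hK1 hrev a0.
rewrite a2 in q.
rewrite (eq_bigr (fun x => rho x * (kapply (Lm K) v x * ln (v x)))) in q; last first.
  by move=> x _; rewrite -(congr1 (fun f => f x) a2).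
have lhs_eq : \sum_x rho x * (kapply (Lm K) U x * (ln (U x) - ln m)) =
   m * \sum_x rho x * (kapply (Lm K) v x * ln (v x)).
  rewrite mulr_sumr; apply: eq_bigr => x _.
  rewrite /v ln_div ?posrE //.
  have -> : kapply (Lm K) (fun x0 => U x0 / m) x = m^-1 * kapply (Lm K) U x.
    by rewrite /kapply mulr_sumr; apply: eq_bigr => y _; ring.
  by field; rewrite gt_eqF.
have rhs_eq : \sum_x rho x * (U x * ln (U x)) - m * ln m =
   m * \sum_x rho x * (v x * ln (v x)).
  have -> : m * ln m = \sum_x rho x * (U x * ln m).
    by rewrite /m /expect mulr_suml; apply: eq_bigr => x _; ring.
  rewrite -sumrB mulr_sumr; apply: eq_bigr => x _.
  rewrite /v ln_div ?posrE //; by field; rewrite gt_eqF.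
rewrite lhs_eq rhs_eq.
set Q := \sum_x _ * (kapply _ v x * _) in q *.
set S := \sum_x _ * (v x * _) in lsi *.
have hSA : A^-1 * S <= dirichlet rho K a by rewrite ler_pdivrMl.
have : 0 <= m * (defect rho K - A^-1 * S - Q).
 apply: mulr_ge0; first exact: ltW.
 rewrite -addrA -opprD subr_ge0; apply: le_trans q; by rewrite lerD2r.
nra.
Qed.

End P5.

Section P6.
Variables (R : realType) (E : finType).

Lemma is_deriveMc (f : R -> R) (c s df : R) :
  is_derive s 1 f df -> is_derive s 1 (fun r => c * f r) (c * df).
Proof.
move=> h; have := is_deriveM' (is_derive_cst c s 1) h.
by rewrite mulr0 addr0.
Qed.

Lemma is_derive_xlnx (f : R -> R) (s df : R) : 0 < f s ->
  is_derive s 1 f df -> is_derive s 1 (fun r => f r * ln (f r)) (df + ln (f s) * df).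
Proof.
move=> fp h.
have hl : is_derive s 1 (@ln R \o f) ((f s)^-1 * df).
  exact: is_derive1_comp (is_derive1_ln fp) h.
have := is_deriveM' h hl.
by rewrite mulrA mulfV ?gt_eqF // mul1r.
Qed.

Lemma rhoL_le0 (rho : E -> R) (K : E -> E -> R) (w : E -> R) :
  (forall x, 0 <= rho x) -> (forall x, \sum_y K x y <= 1) -> reversible rho K ->
  (forall x, 0 <= w x) ->
  \sum_x rho x * kapply (Lm K) w x <= 0.
Proof.
move=> hr hK1 hrev hw.
under eq_bigr do rewrite kapply_Lm /kapply mulrBr mulr_sumr.
rewrite sumrB exchange_big /= subr_le0; apply: ler_sum => y _.
under eq_bigr do rewrite mulrA hrev -mulrA.
rewrite -mulr_sumr -mulr_suml ler_wpM2l // -[X in _ <= X]mul1r ler_wpM2r //.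

Qed.

Lemma defect_ge0 (rho : E -> R) (K : E -> E -> R) :
  (forall x, 0 <= rho x) -> (forall x, \sum_y K x y <= 1) -> 0 <= defect rho K.
Proof.
move=> hr hK1; apply: sumr_ge0 => x _; rewrite mulr_ge0 // subr_ge0 /kapply.
by under eq_bigr do rewrite mulr1.
Qed.


Lemma arith_step (e A dF F C d ms m0 : R) : 0 < e -> 0 < A ->
  dF <= - A^-1 * F + d * ms -> d * ms <= d * m0 -> C = A * d * m0 ->
  e * (dF - 0) + (F - C) * (A^-1 * e) <= 0.
Proof.
move=> e0 A0 k dm ->.
have AA : A^-1 * A = 1 by rewrite mulVf // gt_eqF.
rewrite (_ : _ + _ = e * (dF + A^-1 * F - (A^-1 * A) * d * m0)); last by ring.
rewrite AA mul1r pmulr_rle0 //; nra.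
Qed.

Lemma arith_final (e1 e2 Ft F0 C : R) : 0 < e2 -> e2 * e1 = 1 ->
  e1 * (Ft - C) <= F0 - C -> Ft <= e2 * F0 + C * (1 - e2).
Proof.
move=> e0 ee H.
have := ler_wpM2l (ltW e0) H; rewrite mulrA ee mul1r => H2.
nra.
Qed.

Lemma main_pos (rho : E -> R) (K : E -> E -> R) (A : R) (u0 : E -> R) :
  prob rho -> substochastic K -> reversible rho K -> 0 < A ->
  (forall f : E -> R, (forall x, 0 <= f x) ->
     Ent rho (fun x => f x ^+ 2) <= A * dirichlet rho K f) ->
  (forall x, 0 < u0 x) -> forall t : R, 0 <= t ->
  Hent rho (fun y => Sg (Lm K) t u0 y) <=
    expR (- t / A) * Hent rho u0
    + A * defect rho K * expect rho u0 * (1 - expR (- t / A)).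
Proof.
move=> hp hs hrev A0 hLSI hu t t0.
have [hr h1] := hp; have [hK hK1] := hs.
pose U s y := Sg (Lm K) s u0 y.
have Upos : forall s y, 0 <= s -> 0 < U s y.
  move=> s y s0; rewrite /U Sg_Lm //; apply: mulr_gt0; first exact: expR_gt0.
  by apply: lt_le_trans (hu y) _; apply: Sg_ge => // x; apply: ltW.
pose m s := expect rho (U s).
have mpos : forall s, 0 <= s -> 0 < m s.
  by move=> s s0; apply: expect_gt0 => // y; apply: Upos.
pose F s := \sum_x rho x * (U s x * ln (U s x)) - m s * ln (m s).
have HF : forall s, 0 <= s -> Hent rho (U s) = F s.
  move=> s s0; rewrite /Hent /F.
  have -> : m s * ln (m s) = \sum_x rho x * (U s x * ln (m s)).
    by rewrite /m /expect mulr_suml; apply: eq_bigr => x _; ring.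
  rewrite -sumrB; apply: eq_bigr => x _.
  rewrite gt_eqF ?Upos // -/(m s) ln_div ?posrE ?Upos ?mpos //; ring.
have dU : forall (s : R) y, is_derive s (1 : R) (fun r => U r y) (kapply (Lm K) (U s) y).
  by move=> s y; rewrite /U -Sg_kapply; exact: is_derive_Sg.
have dm : forall s : R, is_derive s (1 : R) m (\sum_x rho x * kapply (Lm K) (U s) x).
  move=> s; rewrite /m /expect.
  by apply: is_derive_sumE => x; apply: is_deriveMc.
pose dF s := \sum_x rho x * (kapply (Lm K) (U s) x * (ln (U s x) - ln (m s))).
have hF : forall s : R, 0 <= s -> is_derive s (1 : R) F (dF s).
  move=> s s0; apply: is_derive_eq.
    apply: is_deriveB'.
      apply: is_derive_sumE => x; apply: is_deriveMc.
      exact: (is_derive_xlnx (Upos s x s0) (dU s x)).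
    exact: (is_derive_xlnx (mpos s s0) (dm s)).
  rewrite /dF mulr_sumr -big_split /= -sumrB; apply: eq_bigr => x _; ring.
have mle : forall s : R, 0 <= s -> m s <= m 0.
  move=> s s0; apply: (nonincr_deriv s0 (fun r _ => dm r)) => r /andP[r0 _].
  apply: rhoL_le0 => // y; apply: ltW; apply: Upos; exact: ltW.
pose C := A * defect rho K * m 0.
pose psi s := expR (A^-1 * s) * (F s - C).
have hpsi : forall s : R, 0 <= s -> is_derive s (1 : R) psi
    (expR (A^-1 * s) * (dF s - 0) + (F s - C) * (A^-1 * expR (A^-1 * s))).
  move=> s s0.
  exact: (is_deriveM' (is_derive_expRc (A^-1) s) (is_deriveB' (hF s s0) (is_derive_cst C s 1))).
have hpsi' : forall s : R, 0 <= s <= t -> is_derive s (1 : R) psi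
    (expR (A^-1 * s) * (dF s - 0) + (F s - C) * (A^-1 * expR (A^-1 * s))).
  by move=> s /andP[s0 _]; apply: hpsi.
have dge := defect_ge0 hr hK1.
have := nonincr_deriv t0 hpsi'.
have hneg : forall s : R, 0 < s < t ->
   expR (A^-1 * s) * (dF s - 0) + (F s - C) * (A^-1 * expR (A^-1 * s)) <= 0.
  move=> s /andP[s0 _].
  have k : dF s <= - A^-1 * F s + defect rho K * m s :=
    keyU hp hs hrev A0 hLSI (fun y => Upos s y (ltW s0)).
  have ms := mle s (ltW s0).
  have dm0 : defect rho K * m s <= defect rho K * m 0 by rewrite ler_wpM2l.
  exact: arith_step (expR_gt0 _) A0 k dm0 erefl.
move=> /(_ hneg) H.
have U0 : U 0 = u0 by apply/funext => y; rewrite /U Sg0.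
have F0 : F 0 = Hent rho u0 by rewrite -HF // U0.
have m0E : m 0 = expect rho u0 by rewrite /m U0.
change (Hent rho (U t) <= expR (- t / A) * Hent rho u0
    + A * defect rho K * expect rho u0 * (1 - expR (- t / A))).
rewrite HF // -F0 -m0E.
have ee : expR (- t / A) * expR (A^-1 * t) = 1.
  by rewrite -expRD (_ : - t / A + A^-1 * t = 0) ?expR0 //; ring.
apply: (arith_final (expR_gt0 _) ee).
move: H; rewrite /psi mulr0 expR0 mul1r.
by [].
Qed.


End P6.

Section P7.
Variables (R : realType) (E : finType).

Lemma xlnx_bound (y : R) : 0 < y -> - (y * ln y) <= 2 * Num.sqrt y.
Proof.
move=> y0; set s := Num.sqrt y.
have s0 : 0 < s by rewrite sqrtr_gt0.
have ys : y = s ^+ 2 by rewrite sqr_sqrtr // ltW.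
have si : 0 < s^-1 by rewrite invr_gt0.
have h := ln_le_sub1 si; rewrite lnV ?posrE // in h.
have h2 : s * (- ln s) <= s * (s^-1 - 1) by rewrite ler_wpM2l // ltW.
rewrite mulrBr mulfV ?gt_eqF // mulr1 in h2.
rewrite ys lnXn // mulr2n; nra.
Qed.

Lemma cvg_xlnx : (fun e : R => e * ln e) @ 0^'+ --> 0.
Proof.
apply/cvgr0Pnorm_le => e e0.
have e2 : 0 < (e / 2) ^+ 2 by rewrite exprn_gt0 // divr_gt0.
near=> y.
have y0 : 0 < y by near: y; exact: nbhs_right_gt.
have y1 : y <= 1 by near: y; apply: nbhs_right_ltW.
have ye : y <= (e / 2) ^+ 2 by near: y; apply: nbhs_right_ltW.
rewrite ler0_norm; last by rewrite mulr_ge0_le0 ?ln_le0 // ltW.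
apply: (le_trans (xlnx_bound y0)).
have : Num.sqrt y <= e / 2.
  have h : Num.sqrt y <= Num.sqrt ((e / 2) ^+ 2) by rewrite ler_sqrt // ltW.
  have e20 : 0 <= e / 2 by rewrite divr_ge0 // ltW.
  by rewrite sqrtr_sqr ger0_norm in h.
lra.
Unshelve. all: by end_near.
Qed.


Lemma cvg_lin (c d : R) : (fun e => c + e * d) @ 0^'+ --> c.
Proof.
apply: cvg_at_right_filter.
rewrite -[X in _ --> X]addr0 -[X in _ --> _ + X](mul0r d).
apply: cvgD; first exact: cvg_cst.
apply: cvgMr_tmp; exact: cvg_id.
Qed.

Lemma cvg_eqnear (f g : R -> R) (l : R) :
  (\forall e \near 0^'+, f e = g e) -> g @ 0^'+ --> l -> f @ 0^'+ --> l.
Proof.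
move=> h hg; apply: cvg_trans hg; apply: near_eq_cvg.
by apply: filterS h => e ->.
Qed.

Lemma cvg_eln (c d : R) : 0 <= c -> 0 < d ->
  (fun e => e * ln (c + e * d)) @ 0^'+ --> 0.
Proof.
rewrite le_eqVlt => /orP[/eqP <-|c0] d0.
  have hg : (fun e => e * ln e + e * ln d) @ 0^'+ --> 0.
    rewrite -[X in _ --> X]addr0 -[X in _ --> _ + X](mul0r (ln d)).
    apply: cvgD; first exact: cvg_xlnx.
    apply: cvgMr_tmp; apply: cvg_at_right_filter; exact: cvg_id.
  apply: cvg_eqnear hg; near=> e.
  have e0 : 0 < e by near: e; exact: nbhs_right_gt.
  by rewrite add0r lnM ?posrE // mulrDr.
rewrite -[X in _ --> X](mul0r (ln c)).
apply: cvgM; first by apply: cvg_at_right_filter; exact: cvg_id.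
apply: (continuous_cvg _ (continuous_ln c0)); exact: cvg_lin.
Unshelve. all: by end_near.
Qed.


Lemma PX (a b ma mb : R) : 0 <= a -> 0 < b -> 0 <= ma -> 0 < mb ->
  (0 < a -> 0 < ma) ->
  (fun e => if a + e * b == 0 then 0
            else (a + e * b) * ln ((a + e * b) / (ma + e * mb))) @ 0^'+ -->
  (if a == 0 then 0 else a * ln (a / ma)).
Proof.
move=> a0 b0 ma0 mb0 ham.
apply: (@cvg_eqnear _ (fun e => (a + e * b) * (ln (a + e * b) - ln (ma + e * mb)))).
  near=> e.
  have e0 : 0 < e by near: e; exact: nbhs_right_gt.
  have p1 : 0 < a + e * b by rewrite ltr_wpDl // mulr_gt0.
  have p2 : 0 < ma + e * mb by rewrite ltr_wpDl // mulr_gt0.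
  by rewrite gt_eqF // ln_div.
move: a0; rewrite le_eqVlt => /orP[/eqP <-|ap].
  rewrite eqxx.
  apply: (@cvg_eqnear _ (fun e => b * (e * ln e) + (b * ln b) * e - b * (e * ln (ma + e * mb)))).
    near=> e.
    have e0 : 0 < e by near: e; exact: nbhs_right_gt.
    rewrite add0r lnM ?posrE //; ring.
  rewrite [X in _ --> X](_ : 0 = b * 0 + b * ln b * 0 - b * 0); last by ring.
  apply: cvgB; first apply: cvgD.
  - by apply: cvgMl_tmp; exact: cvg_xlnx.
  - by apply: cvgMl_tmp; apply: cvg_at_right_filter; exact: cvg_id.
  - by apply: cvgMl_tmp; exact: cvg_eln.
have map := ham ap.
rewrite gt_eqF // ln_div ?posrE //.
apply: cvgM; first exact: cvg_lin.
apply: cvgB.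
  by apply: (continuous_cvg _ (continuous_ln ap)); exact: cvg_lin.
by apply: (continuous_cvg _ (continuous_ln map)); exact: cvg_lin.
Unshelve. all: by end_near.
Qed.


Lemma Hent_cont (rho a b : E -> R) : (forall x, 0 <= rho x) ->
  (forall x, 0 <= a x) -> (forall x, 0 < b x) -> 0 < expect rho b ->
  (fun e => Hent rho (fun y => a y + e * b y)) @ 0^'+ --> Hent rho a.
Proof.
move=> hr ha hb mb.
have em : forall e, expect rho (fun y => a y + e * b y) = expect rho a + e * expect rho b.
  by move=> e; rewrite /expect mulr_sumr -big_split; apply: eq_bigr => x _ /=; ring.
apply: (@cvg_eqnear _ (fun e => \sum_x rho x * (if a x + e * b x == 0 then 0
   else (a x + e * b x) * ln ((a x + e * b x) / (expect rho a + e * expect rho b))))).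
  by near=> e; rewrite /Hent em.
rewrite /Hent; apply: cvg_sumE => x.
have := hr x; rewrite le_eqVlt => /orP[/eqP rx0|rxp].
  rewrite -rx0 mul0r; apply: (@cvg_eqnear _ (fun _ => 0)); last exact: cvg_cst.
  by near=> e; rewrite mul0r.
have ma0 : 0 <= expect rho a by apply: sumr_ge0 => y _; rewrite mulr_ge0.
apply: cvgMl_tmp; apply: PX => // ap.
apply: (lt_le_trans (mulr_gt0 rxp ap)).
rewrite /expect (bigD1 x) //= lerDl; apply: sumr_ge0 => y _; rewrite mulr_ge0 //.
Unshelve. all: by end_near.
Qed.

End P7.

End Helpers.
Import Helpers.

Local Open Scope classical_set_scope.
Local Open Scope ring_scope.

Theorem lemma2p4 (R : realType) (E : finType) (rho : E -> R) (K : E -> E -> R)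
    (A : R) :
  prob rho -> substochastic K -> reversible rho K -> 0 < A ->
  (forall f : E -> R, (forall x, 0 <= f x) ->
     Ent rho (fun x => f x ^+ 2) <= A * dirichlet rho K f) ->
  forall (u0 : E -> R), (forall x, 0 <= u0 x) ->
  forall t : R, 0 <= t ->
    Hent rho (semigroup K t u0) <=
      expR (- t / A) * Hent rho u0
      + A * defect rho K * expect rho u0 * (1 - expR (- t / A)).
Proof.
move=> hp hs hrev A0 hLSI u0 hu0 t t0.
have [hr h1] := hp; have [hK hK1] := hs.
have SE : semigroup K t u0 = (fun y => Sg (Lm K) t u0 y).
  by apply/funext => y; rewrite semigroupE.
rewrite SE.
pose a y := Sg (Lm K) t u0 y.
pose b y := Sg (Lm K) t (fun _ => 1) y.
have a0 : forall y, 0 <= a y.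
  move=> y; rewrite /a Sg_Lm // mulr_ge0 ?expR_ge0 //.
  by apply: le_trans (hu0 y) _; apply: Sg_ge.
have b0 : forall y, 0 < b y.
  move=> y; rewrite /b Sg_Lm // mulr_gt0 ?expR_gt0 //.
  apply: (lt_le_trans ltr01).
  exact: (@Sg_ge R E K (fun _ => 1) t y hK (fun _ => ler01) t0).
have mb : 0 < expect rho b := expect_gt0 hp b0.
have m1 : 0 < expect rho (fun _ : E => 1).
  by rewrite /expect; under eq_bigr do rewrite mulr1; rewrite h1 ltr01.
have lin : forall e y, Sg (Lm K) t (fun y => u0 y + e * 1) y = a y + e * b y.
  move=> e y.
  have -> : (fun y => u0 y + e * 1) = (fun y => 1 * u0 y + e * (fun _ : E => (1:R)) y).
    by apply/funext => z; rewrite mul1r.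
  by rewrite Sg_lin mul1r.
set e2 := expR (- t / A).
have LHS := Hent_cont hr a0 b0 mb.
have RHS : (fun e => e2 * Hent rho (fun y => u0 y + e * 1)
    + A * defect rho K * expect rho (fun y => u0 y + e * 1) * (1 - e2)) @ 0^'+ -->
    e2 * Hent rho u0 + A * defect rho K * expect rho u0 * (1 - e2).
  apply: cvgD.
    apply: cvgMl_tmp.
    exact: (Hent_cont hr hu0 (fun _ => ltr01) m1).
  apply: cvgMr_tmp; apply: cvgMl_tmp.
  apply: (@cvg_eqnear _ _ (fun e => expect rho u0 + e * expect rho (fun _ => 1))).
    near=> e; rewrite /expect mulr_sumr -big_split; apply: eq_bigr => x _ /=; ring.
  exact: cvg_lin.
apply: (ler_cvg_to LHS RHS).
near=> e.
have e0 : 0 < e by near: e; exact: nbhs_right_gt.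
have hpos : forall x, 0 < u0 x + e * 1 by move=> x; rewrite mulr1 ltr_wpDl.
have := main_pos hp hs hrev A0 hLSI hpos t0.
rewrite (_ : (fun y => Sg (Lm K) t (fun y0 => u0 y0 + e * 1) y) = (fun y => a y + e * b y)) //.
by apply/funext => y; exact: lin.
Unshelve. all: by end_near.
Qed.
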